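(* Let $X\sim P_X$ be a real-valued random variable, let $Z\sim\mathcal{N}(0,1)$ be independent of $X$, set $Y=X+Z$, and fix $a>0$. Define the measure $\mu$ on $\mathbb{R}$ by $\mu(\mathrm{d}x)=\exp\!\left((1-a)\frac{x^2}{2}\right)P_X(\sqrt{a}\,\mathrm{d}x)$, i.e. $\mu$ has density $x\mapsto \exp((1-a)x^2/2)$ with respect to the measure $A\mapsto P_X(\sqrt a A)$. Let $\phi$ and $\Phi$ be the standard Gaussian pdf and cdf, and $g(x)=\max(\Phi(x),1-\Phi(x))$ (so $g'(x)=\mathsf{sign}(x)\phi(x)$). Then $\mathsf{m}(X\mid Y=y)=ay$ for all $y\in\mathbb{R}$ if and only if for all $y\in\mathbb{R}$ $$0=\int_{-\infty}^{\infty}\mathsf{sign}(x-y)\,\phi(y-x)\,\mu(\mathrm{d}x)=\int_{-\infty}^{\infty}g'(x-y)\,\mu(\mathrm{d}x).$$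
   Context: The conditional median is $\mathsf{m}(X\mid Y=y)=F^{-1}_{X\mid Y=y}(1/2)$, where $F_{X\mid Y=y}$ is the conditional cdf of $X$ given $Y=y$ and $F^{-1}(p)=\inf\{x\in\mathbb{R}: p\le F(x)\}$. *)

(* Defs.v *)
From HB Require Import structures.
From mathcomp Require Import all_boot all_order all_algebra.
From mathcomp Require Import all_classical all_reals all_analysis.
From mathcomp Require Import measurable_realfun.
Set Implicit Arguments. Unset Strict Implicit. Unset Printing Implicit Defensive.
Import Order.TTheory GRing.Theory Num.Theory.
Import numFieldNormedType.Exports.
Local Open Scope classical_set_scope.
Local Open Scope ring_scope.

Section defs.
Context {R : realType}.

Definition phi (x : R) : R := normal_pdf 0 1 x.

Definition gprime (x : R) : R := Num.sg x * phi x.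

(* Conditional cdf of X given Y = y, where Y = X + Z, Z ~ N(0,1) independent
   of X ~ P:  F_{X|Y=y}(t) = E[phi(y-X) 1{X <= t}] / E[phi(y-X)]  (Bayes). *)
Definition cond_cdf (P : probability R R) (y t : R) : R :=
  fine (\int[P]_(x in `]-oo, t]) (phi (y - x))%:E)%E
  / fine (\int[P]_x (phi (y - x))%:E)%E.

Definition cond_median (P : probability R R) (y : R) : R :=
  inf [set t : R | 2^-1 <= cond_cdf P y t].
End defs.

Section scaled.
Context {R : realType} (P : probability R R) (a : R).

Definition scaled (A : set R) : \bar R :=
  P ((fun x => x / Num.sqrt a) @^-1` A).

Let mscale : measurable_fun [set: R] (fun x : R => x / Num.sqrt a).
Proof. by apply: measurable_funM => //; exact: measurable_cst. Qed.

Let scaled0 : scaled set0 = 0%E.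
Proof. by rewrite /scaled preimage_set0 measure0. Qed.

Let scaled_ge0 A : (0 <= scaled A)%E.
Proof. exact: measure_ge0. Qed.

Let scaled_sigma_additive : semi_sigma_additive scaled.
Proof.
move=> F mF tF mUF; rewrite /scaled preimage_bigcup.
apply: measure_semi_sigma_additive.
- by move=> n; rewrite -[X in measurable X]setTI; exact: mscale.
- apply/trivIsetP => /= i j _ _ ij; rewrite -preimage_setI.
  by move/trivIsetP : tF => /(_ _ _ _ _ ij) ->//; rewrite preimage_set0.
- by rewrite -preimage_bigcup -[X in measurable X]setTI; exact: mscale.
Qed.

HB.instance Definition _ := isMeasure.Build _ _ _
  scaled scaled0 scaled_ge0 scaled_sigma_additive.
End scaled.

Section mu.
Context {R : realType} (P : probability R R) (a : R).

Definition dens (x : R) : \bar R := (expR ((1 - a) * x ^+ 2 / 2))%:E.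

Definition mu_meas (A : set R) : \bar R := (\int[scaled P a]_(x in A) dens x)%E.

Let mdens : measurable_fun [set: R] dens.
Proof.
apply/measurable_EFinP; apply: measurableT_comp => //.
apply: measurable_funM => //.
by apply: measurable_funM => //; exact: measurable_funX.
Qed.

Let dens_ge0 x : (0 <= dens x)%E.
Proof. by rewrite lee_fin expR_ge0. Qed.

Let mu0 : mu_meas set0 = 0%E.
Proof. by rewrite /mu_meas integral_set0. Qed.

Let mu_ge0 A : (0 <= mu_meas A)%E.
Proof. by apply: integral_ge0 => x _; exact: dens_ge0. Qed.

Let mu_sigma_additive : semi_sigma_additive mu_meas.
Proof. exact: semi_sigma_additive_nng_induced. Qed.

HB.instance Definition _ := isMeasure.Build _ _ _
  mu_meas mu0 mu_ge0 mu_sigma_additive.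
End mu.

(* Main.v *)
Require Import Defs.
From HB Require Import structures.
From mathcomp Require Import all_boot all_order all_algebra.
From mathcomp Require Import all_classical all_reals all_analysis.
From mathcomp Require Import measurable_realfun.
From mathcomp Require Import ring lra.
Import Order.TTheory GRing.Theory Num.Theory.
Import numFieldNormedType.Exports.
Local Open Scope classical_set_scope.
Local Open Scope ring_scope.

Section dens.
Local Open Scope ereal_scope.
Context d (T : measurableType d) (R : realType).
Variables (m nu : {measure set T -> \bar R}) (g : T -> R).
Hypothesis mg : measurable_fun setT g.
Hypothesis g0 : forall x, (0 <= g x)%R.
Hypothesis hnu : forall A, measurable A -> nu A = \int[m]_(x in A) (g x)%:E.
Import HBNNSimple.

Lemma density_integral (f : T -> \bar R) : (forall x, 0 <= f x) ->
    measurable_fun setT f ->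
  \int[m]_x (f x * (g x)%:E) = \int[nu]_x f x.
Proof.
move=> f0 mf; pose E := @setT T; have mE : measurable E by exact: measurableT.
set g' := fun x => (g x)%:E.
have mg' : measurable_fun E g' by apply/measurable_EFinP; exact: mg.
have g'0 x : 0 <= g' x by rewrite lee_fin.
pose h := nnsfun_approx mE mf.
have -> : \int[nu]_(x in E) f x =
    lim (\int[nu]_(x in E) (EFin \o h n) x @[n --> \oo]).
  have fE x : E x -> f x = lim ((EFin \o h n) x @[n --> \oo]).
    by move=> Ex; apply/esym/cvg_lim => //; exact: cvg_nnsfun_approx.
  under eq_integral => x /[!inE] /fE -> //.
  apply: monotone_convergence => //.
  - move=> n; apply/measurable_EFinP.
    by apply: (measurable_funS measurableT) => //; exact/measurable_funP.
  - by move=> n x Ex //=; rewrite lee_fin.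
  - by move=> x Ex a b ab; rewrite lee_fin; exact/lefP/nd_nnsfun_approx.
have -> : \int[m]_(x in E) (f \* g') x =
    lim (\int[m]_(x in E) ((EFin \o h n) \* g') x @[n --> \oo]).
  have fg x : E x -> f x * g' x = lim (((EFin \o h n) \* g') x @[n --> \oo]).
    by move=> Ex; apply/esym/cvg_lim => //; apply: cvgeZr;
      [by []|exact: cvg_nnsfun_approx].
  under eq_integral => x /[!inE] /fg -> //.
  apply: monotone_convergence => [//| | |].
  - move=> n; apply/emeasurable_funM => //; apply/measurable_funTS.
      exact/measurable_EFinP.
  - by move=> n x Ex /=; rewrite mule_ge0 ?lee_fin.
  - by move=> x Ex a b ab/=; rewrite lee_wpmul2r ?lee_fin//; exact/lefP/nd_nnsfun_approx.
suff suf n : \int[m]_(x in E) ((EFin \o h n) x * g' x) =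
    \int[nu]_(x in E) (EFin \o h n) x.
  by under eq_fun do rewrite suf.
transitivity (\int[nu]_(x in E)
   (\sum_(y \in range (h n)) (y * \1_(h n @^-1` [set y]) x)%:E)); last first.
  by apply: eq_integral => t tE; rewrite /= fimfunE -fsumEFin.
have indich k r : measurable_fun E (fun x => (r * \1_(h k @^-1` [set r]) x)%:E).
  by apply: (measurable_comp measurableT) => //; exact: measurable_funM.
rewrite ge0_integral_fsum//; last by move=> k y Ey; exact: nnfun_muleindic_ge0.
transitivity (\int[m]_(x in E) (\sum_(y \in range (h n))
    (y * \1_(h n @^-1` [set y]) x)%:E * g' x)).
  under [RHS]eq_integral => x xE.
    rewrite -ge0_mule_fsuml => [|y]; last exact: nnfun_muleindic_ge0.
    rewrite fsumEFin // -(fimfunE _ x); over.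
  by [].
rewrite ge0_integral_fsum//; last 2 first.
  - by move=> y; apply: emeasurable_funM => //.
  - by move=> k y Ey; rewrite mule_ge0 ?nnfun_muleindic_ge0.
apply: eq_fsbigr => r rhn.
under [RHS]eq_integral do rewrite EFinM.
rewrite integralZl_indic_nnsfun => //.
under eq_integral do rewrite EFinM -muleA.
rewrite ge0_integralZl//.
- under eq_integral do rewrite muleC.
  rewrite (eq_integral (g' \_ (h n @^-1` [set r]))); last first.
    by move=> x xE; rewrite epatch_indic.
  by rewrite -integral_mkcondr -hnu// integral_indic// setIC.
- apply: emeasurable_funM => //; exact/measurable_EFinP.
- by move=> t Et; rewrite mule_ge0 ?lee_fin.
- by move: rhn; rewrite inE => -[t _ <-]; rewrite lee_fin.
Qed.
End dens.

Section phi_facts.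
Context {R : realType}.

Lemma phiE (x : R) : phi x = normal_peak 1 * expR (- x ^+ 2 / 2).
Proof.
rewrite /phi /normal_pdf oner_eq0 /normal_fun subr0 expr1n.
done.
Qed.

Lemma phi_gt0 (x : R) : 0 < phi x.
Proof. by rewrite phiE mulr_gt0 ?expR_gt0 ?normal_peak_gt0 ?oner_eq0. Qed.

Lemma phi_ge0 (x : R) : 0 <= phi x.
Proof. exact/ltW/phi_gt0. Qed.

Lemma phi_ub (x : R) : phi x <= normal_peak 1.
Proof. by apply: normal_pdf_ub; rewrite oner_eq0. Qed.

Lemma phiN (x : R) : phi (- x) = phi x.
Proof. by rewrite !phiE sqrrN. Qed.

Lemma mphi (c : R) : measurable_fun setT (fun x : R => phi (c - x)).
Proof.
apply: (measurableT_comp (measurable_normal_pdf 0 1)).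
exact: measurable_funB.
Qed.

Lemma phi_tilt (c c' x : R) :
  phi (c' - x) = expR ((c ^+ 2 - c' ^+ 2) / 2) * phi (c - x) * expR ((c' - c) * x).
Proof.
rewrite !phiE mulrCA -mulrA -!expRD; congr (_ * expR _).
by field.
Qed.

Lemma continuous_phi : continuous (@phi R).
Proof. by apply: continuous_normal_pdf; rewrite oner_eq0. Qed.
End phi_facts.

Section arith.
Context {R : realType}.
Lemma arith1 {T x y A B K k1 k2 : R} : 0 < T -> T <= 2 * x -> T = x + y -> 0 <= y ->
  K * k2 * x <= A -> B <= K * k1 * y -> A = B -> k1 < k2 -> 0 < k1 -> 0 < K -> False.
Proof.
move=> T0 Tx Txy y0 lo hi AB k12 k10 K0.
have x0 : 0 < x by lra.
have Kk : K * k1 < K * k2 by rewrite ltr_pM2l.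
have h1 : K * k1 * y <= K * k1 * x.
  apply: ler_wpM2l; last lra.
  by apply: mulr_ge0; exact: ltW.
have h2 : K * k1 * x < K * k2 * x by rewrite ltr_pM2r.
lra.
Qed.
End arith.

Section Jsec.
Context {R : realType} (P : probability R R).
Local Open Scope ereal_scope.

Definition J (c : R) (D : set R) : \bar R := \int[P]_(x in D) (phi (c - x))%:E.

Lemma mphiE (c : R) (D : set R) : measurable_fun D (fun x => (phi (c - x))%:E).
Proof. by apply/measurable_EFinP; apply: measurable_funTS; exact: mphi. Qed.

Lemma J_ge0 c D : 0 <= J c D.
Proof. by apply: integral_ge0 => x _; rewrite lee_fin phi_ge0. Qed.

Lemma J_le1 c D : measurable D -> J c D <= (normal_peak 1)%:E.
Proof.
move=> mD; apply: (@le_trans _ _ (\int[P]_(x in D) (cst (normal_peak 1)%:E) x)).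
  apply: ge0_le_integral => //.
  - by move=> x _; rewrite lee_fin phi_ge0.
  - exact: mphiE.
  - by move=> x _; rewrite lee_fin phi_ub.
rewrite integral_cst //; apply: (@le_trans _ _ ((normal_peak 1)%:E * 1)).
  by rewrite lee_wpmul2l ?lee_fin ?normal_peak_ge0 // probability_le1.
by rewrite mule1.
Qed.

Lemma J_fin c D : measurable D -> J c D \is a fin_num.
Proof.
move=> mD; rewrite ge0_fin_numE ?J_ge0 //.
exact: (le_lt_trans (@J_le1 c D mD) (ltry _)).

Qed.

Lemma J_setU c A B : measurable A -> measurable B -> [disjoint A & B] ->
  J c (A `|` B) = J c A + J c B.
Proof.
move=> mA mB AB; rewrite /J ge0_integral_setU //; first exact: mphiE.
by move=> x _; rewrite lee_fin phi_ge0.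
Qed.

Lemma J_le c A B : measurable A -> measurable B -> A `<=` B -> J c A <= J c B.
Proof.
move=> mA mB AB; apply: ge0_subset_integral => //; first exact: mphiE.
by move=> x _; rewrite lee_fin phi_ge0.
Qed.

Lemma J_T_gt0 c : 0 < J c setT.
Proof.
rewrite lt0e J_ge0 andbT; apply/negP => /eqP J0.
have : \int[P]_(x in setT) `|(phi (c - x))%:E| = 0.
  by rewrite -J0; apply: eq_integral => x _; rewrite gee0_abs // lee_fin phi_ge0.
move/ae_eq_integral_abs => /(_ measurableT (mphiE c setT)) [N [mN PN0 sub]].
have : P setT <= P N.
  apply: le_measure; rewrite ?inE //.
  move=> x _; apply: sub => /= /(_ I) /eqP.
  by rewrite eqe gt_eqF // phi_gt0.
by rewrite PN0 probability_setT lee_fin ler10.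
Qed.
End Jsec.

Section jsec.
Context {R : realType} (P : probability R R).
Local Notation J := (J P).

Definition j (c : R) (D : set R) : R := fine (J c D).

Lemma Jj c D : measurable D -> J c D = (j c D)%:E.
Proof. by move=> mD; rewrite /j fineK // J_fin. Qed.

Lemma j_ge0 c D : 0 <= j c D.
Proof. by rewrite /j fine_ge0 // J_ge0. Qed.

Lemma j_setU c A B : measurable A -> measurable B -> [disjoint A & B] ->
  j c (A `|` B) = j c A + j c B.
Proof.
move=> mA mB AB; apply: EFin_inj; rewrite EFinD -!Jj //; last exact: measurableU.
exact: J_setU.
Qed.

Lemma j_le c A B : measurable A -> measurable B -> A `<=` B -> j c A <= j c B.
Proof. by move=> mA mB AB; rewrite -lee_fin -!Jj //; exact: J_le. Qed.

Lemma j_T_gt0 c : 0 < j c setT.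
Proof. by rewrite -lte_fin -Jj //; exact: J_T_gt0. Qed.

Lemma j_cont (D : set R) (u : nat -> R) (c : R) : measurable D ->
  u @ \oo --> c -> (fun n => j (u n) D) @ \oo --> j c D.
Proof.
move=> mD hu; apply: fine_cvg; rewrite -Jj //.
rewrite /J; apply: (@dominated_cvg _ _ _ P D mD (fun n x => (phi (u n - x))%:E)
  _ (fun=> (normal_peak 1)%:E)).
- by move=> n; exact: mphiE.
- move=> x _; apply: cvg_EFin; first exact: nearW.
  exact: (cvg_comp _ _ (cvgB hu (cvg_cst x)) (continuous_phi _)).
- by [].
- exact: finite_measure_integrable_cst.
- by move=> n x _; rewrite gee0_abs ?lee_fin ?phi_ge0 ?phi_ub.
Qed.

Lemma J_tilt (c c' : R) (D : set R) : measurable D -> J c' D =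
  (\int[P]_(x in D) ((expR ((c ^+ 2 - c' ^+ 2) / 2) * expR ((c' - c) * x)) * phi (c - x))%:E)%E.
Proof.
move=> mD; apply: eq_integral => x _; rewrite (phi_tilt c); congr (_%:E); ring.
Qed.

Lemma J_tilt_lb (c c' : R) (D : set R) (t : R) : measurable D -> c' <= c -> (forall x, D x -> x <= t) ->
  (((expR ((c ^+ 2 - c' ^+ 2) / 2) * expR ((c' - c) * t)))%:E * J c D <= J c' D)%E.
Proof.
move=> mD cc' Dt; rewrite (J_tilt c c') // /J -ge0_integralZl_EFin //; try exact: mphiE;
  try (by move=> x _; rewrite lee_fin phi_ge0); try (by rewrite mulr_ge0 ?expR_ge0).
apply: ge0_le_integral => //.
- by move=> x _; rewrite -EFinM lee_fin mulr_ge0 ?mulr_ge0 ?expR_ge0 ?phi_ge0.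
- under eq_fun do rewrite -EFinM; apply/measurable_EFinP.
  apply: measurable_funM; first exact: measurable_cst.
  by apply: measurable_funTS; exact: mphi.
- apply/measurable_EFinP; apply: measurable_funM.
    apply: measurable_funM; first exact: measurable_cst.
    by apply: measurableT_comp => //; apply: measurable_funTS.
  by apply: measurable_funTS; exact: mphi.
- move=> x Dx; rewrite -EFinM lee_fin ler_wpM2r ?phi_ge0 // ler_wpM2l ?expR_ge0 //.
  by rewrite ler_expR ler_wnM2l ?subr_le0 ?Dt.
Qed.

Lemma J_tilt_ub (c c' : R) (D : set R) (s : R) : measurable D -> c' <= c -> (forall x, D x -> s <= x) ->
  (J c' D <= ((expR ((c ^+ 2 - c' ^+ 2) / 2) * expR ((c' - c) * s)))%:E * J c D)%E.
Proof.
move=> mD cc' Ds; rewrite (J_tilt c c') // /J -ge0_integralZl_EFin //; try exact: mphiE;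
  try (by move=> x _; rewrite lee_fin phi_ge0); try (by rewrite mulr_ge0 ?expR_ge0).
apply: ge0_le_integral => //.
- by move=> x _; rewrite lee_fin mulr_ge0 ?mulr_ge0 ?expR_ge0 ?phi_ge0.
- apply/measurable_EFinP; apply: measurable_funM.
    apply: measurable_funM; first exact: measurable_cst.
    by apply: measurableT_comp => //; apply: measurable_funTS.
  by apply: measurable_funTS; exact: mphi.
- under eq_fun do rewrite -EFinM; apply/measurable_EFinP.
  apply: measurable_funM; first exact: measurable_cst.
  by apply: measurable_funTS; exact: mphi.
- move=> x Dx; rewrite -EFinM lee_fin ler_wpM2r ?phi_ge0 // ler_wpM2l ?expR_ge0 //.
  by rewrite ler_expR ler_wnM2l ?subr_le0 ?Ds.
Qed.
End jsec.

Section med.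
Context {R : realType} (P : probability R R).
Local Notation j := (j P).

Definition Smed (c : R) := [set t : R | 2^-1 <= cond_cdf P c t].

Lemma memS c t : Smed c t <-> j c setT <= 2 * j c `]-oo, t].
Proof.
rewrite /Smed /= /cond_cdf -/(J P c _) -/(j c _) -/(J P c setT) -/(j c setT).
have T0 := j_T_gt0 P c.
rewrite ler_pdivlMr //; split => H; lra.
Qed.

Lemma setT_LeGt (t : R) : [set: R] = `]-oo, t] `|` `]t, +oo[.
Proof.
apply/seteqP; split => x //= _; rewrite /= !in_itv /= andbT.
by case: (leP x t) => h; [left|right].
Qed.

Lemma disj_LeGt (t : R) : [disjoint `]-oo, t] & `]t, +oo[].
Proof.
apply/disj_setPS => x [] /=; rewrite !in_itv /= andbT => h1 h2.
by move: (lt_le_trans h2 h1); rewrite ltxx.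
Qed.

Lemma Le_LtEq (t : R) : `]-oo, t]%classic = `]-oo, t[%classic `|` [set t].
Proof.
apply/seteqP; split => x /=; rewrite !in_itv /=.
  by rewrite le_eqVlt => /orP [/eqP ->|h]; [right|left].
by case=> [/ltW|->].
Qed.

Lemma disj_LtEq (t : R) : [disjoint `]-oo, t[ & [set t]].
Proof.
by apply/disj_setPS => x [] /=; rewrite !in_itv /= => h xt; rewrite xt ltxx in h.
Qed.

Lemma jT c t : j c setT = j c `]-oo, t] + j c `]t, +oo[.
Proof. rewrite -j_setU //; try exact: disj_LeGt; by rewrite -setT_LeGt. Qed.

Lemma jLe c t : j c `]-oo, t] = j c `]-oo, t[ + j c [set t].
Proof. rewrite -j_setU //; try exact: disj_LtEq; by rewrite -Le_LtEq. Qed.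

Lemma med_of_bal (a : R) : 0 < a ->
  (forall c, j c `]-oo, a * c[ = j c `]a * c, +oo[) ->
  forall c, inf (Smed c) = a * c.
Proof.
move=> a0 bal c; set m := a * c.
have mS : Smed c m.
  apply/memS; rewrite (jT c m) (jLe c m) (bal c).
  have := j_ge0 P c [set m]; lra.
have lb : forall t, Smed c t -> m <= t.
  move=> t /memS St; rewrite leNgt; apply/negP => tm.
  pose s := (t + m) / 2; pose c' := s / a.
  have ts : t < s by rewrite /s; lra.
  have sm : s < m by rewrite /s; lra.
  have cc' : c' < c by rewrite /c' ltr_pdivrMr // mulrC.
  have ac' : a * c' = s by rewrite /c' mulrC divfK // gt_eqF.
  have := bal c'; rewrite ac' => balc'.
  set K := expR ((c ^+ 2 - c' ^+ 2) / 2).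
  have K0 : 0 < K by exact: expR_gt0.
  have Est : expR ((c' - c) * s) < expR ((c' - c) * t).
    by rewrite ltr_expR ltr_nM2l // subr_lt0.
  have Es0 : 0 < expR ((c' - c) * s) by exact: expR_gt0.
  have lo := @J_tilt_lb _ P c c' `]-oo, t] t (measurable_itv _) (ltW cc').
  have hi := @J_tilt_ub _ P c c' `]s, +oo[ s (measurable_itv _) (ltW cc').
  rewrite (@Jj _ P c _ (measurable_itv _)) (@Jj _ P c' _ (measurable_itv _)) -EFinM lee_fin in lo.
  rewrite (@Jj _ P c _ (measurable_itv _)) (@Jj _ P c' _ (measurable_itv _)) -EFinM lee_fin in hi.
  have lo' : K * expR ((c' - c) * t) * j c `]-oo, t] <= j c' `]-oo, s[.
    apply: (le_trans (lo _)); first by move=> x /=; rewrite in_itv /= ?andbT.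
    by apply: j_le => // x /=; rewrite !in_itv /=; move=> h; exact: le_lt_trans h ts.
  have hi' : j c' `]s, +oo[ <= K * expR ((c' - c) * s) * j c `]t, +oo[.
    apply: (le_trans (hi _)); first by move=> x /=; rewrite in_itv /= ?andbT => /ltW.
    rewrite ler_wpM2l ?mulr_ge0 ?expR_ge0 //; apply: j_le => // x /=.
    by rewrite !in_itv /= !andbT => h; exact: lt_trans ts h.
  exact: (arith1 (j_T_gt0 P c) St (jT c t) (j_ge0 P c _) lo' hi' balc' Est Es0 K0).
apply/le_anti/andP; split.
  by apply: ge_inf => //; exists m => z /lb.
by apply: lb_le_inf; [exists m | move=> z /lb].
Qed.

Lemma bal_of_med (a : R) : 0 < a ->
  (forall c, inf (Smed c) = a * c) ->
  forall c, j c `]-oo, a * c[ = j c `]a * c, +oo[.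
Proof.
move=> a0 med c; set m := a * c.
have Shas : forall c', c' != 0 -> has_inf (Smed c').
  move=> c' c'0; apply/not_notP => hn; move: (med c'); rewrite inf_out //.
  move/esym/eqP; rewrite mulf_eq0 gt_eqF //=; exact/negP.
have notS : forall c' t, c' != 0 -> t < a * c' -> ~ Smed c' t.
  move=> c' t c'0 tac St; have [_ hl] := Shas c' c'0.
  have := ge_inf hl St; rewrite med => h.
  by move: (le_lt_trans h tac); rewrite ltxx.
have yesS : forall c' t, c' != 0 -> a * c' < t -> exists2 s, Smed c' s & s < t.
  move=> c' t c'0 act; have [hne _] := Shas c' c'0.
  by apply: inf_lt => //; rewrite med.
pose r := if c == 0 then 1 else `|c| / 2.
have r0 : 0 < r.
  rewrite /r; case: eqP => [_|/eqP c0]; first exact: ltr01.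
  by rewrite divr_gt0 // normr_gt0.
pose e (n : nat) := r / n.+1%:R.
have e0 n : 0 < e n by rewrite /e divr_gt0.
have er n : e n <= r.
  by rewrite /e ler_pdivrMr // ler_pMr // ler1n.
have ecvg : e @ \oo --> 0.
  have -> : e = (fun n => r * harmonic n) by apply/funext => n; rewrite /e /=.
  rewrite -(mulr0 r); apply: cvgM; first exact: cvg_cst.
  exact: cvg_harmonic.
have hnz : forall n, (c + e n != 0) && (c - e n != 0).
  move=> n; have := e0 n; have := er n; rewrite /r.
  case: eqP => [-> _ h|/eqP c0 h1 h2]; first by rewrite add0r sub0r oppr_eq0 gt_eqF.
  case: (ltgtP c 0) => hc; last by move/eqP: c0.
  - rewrite ltr0_norm // in h1.
    by apply/andP; split; apply/negP => /eqP; lra.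
  - rewrite gtr0_norm // in h1.
    by apply/andP; split; apply/negP => /eqP; lra.
have up : j c `]-oo, m] + j c `]-oo, m] - j c setT <= 0.
  pose u n := c + e n.
  have ucvg : u @ \oo --> c by rewrite -[X in _ --> X]addr0; apply: cvgD => //; exact: cvg_cst.
  have hc : (fun n => j (u n) `]-oo, m] + j (u n) `]-oo, m] - j (u n) setT) @ \oo -->
     j c `]-oo, m] + j c `]-oo, m] - j c setT.
    by apply: cvgB; [apply: cvgD|]; apply: j_cont.
  apply: (cvgr_to_le hc).
  apply: nearW => n /=.
  have un0 : u n != 0 by have /andP[] := hnz n.
  have mu : m < a * u n by rewrite /m /u mulrDr ltrDl mulr_gt0.
  have := notS _ _ un0 mu; rewrite memS => h.
  have : 2 * j (u n) `]-oo, m] < j (u n) setT by rewrite ltNge; exact/negP.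
  lra.
have down : j c setT - (j c `]-oo, m[ + j c `]-oo, m[) <= 0.
  pose u n := c - e n.
  have ucvg : u @ \oo --> c by rewrite -[X in _ --> X]subr0; apply: cvgB => //; exact: cvg_cst.
  have hc : (fun n => j (u n) setT - (j (u n) `]-oo, m[ + j (u n) `]-oo, m[)) @ \oo -->
     j c setT - (j c `]-oo, m[ + j c `]-oo, m[).
    by apply: cvgB; [|apply: cvgD]; apply: j_cont.
  apply: (cvgr_to_le hc).
  apply: nearW => n /=.
  have un0 : u n != 0 by have /andP[] := hnz n.
  have mu : a * u n < m by rewrite /m /u mulrBr ltrBlDr ltrDl mulr_gt0.
  have [s Ss sm] := yesS _ _ un0 mu; move/memS: Ss => h.
  have : j (u n) `]-oo, s] <= j (u n) `]-oo, m[.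
    by apply: j_le => // x /=; rewrite !in_itv /= => xs; exact: le_lt_trans xs sm.
  lra.
have := jT c m; have := jLe c m; have := j_ge0 P c [set m]; lra.
Qed.
End med.

Section transfer.
Context {R : realType} (P : probability R R) (a : R) (a0 : 0 < a).
Local Open Scope ereal_scope.

Let sa := Num.sqrt a.
Let sa0 : (0 < sa)%R. Proof. by rewrite sqrtr_gt0. Qed.
Let sc (x : R) : R := (x / sa)%R.
Let msc : measurable_fun setT sc.
Proof. by apply: measurable_funM => //; exact: measurable_cst. Qed.

Lemma scaled_int (f : R -> \bar R) : (forall x, 0 <= f x) -> measurable_fun setT f ->
  \int[scaled P a]_x f x = \int[P]_x f (x / sa)%R.
Proof.
move=> f0 mf.
have := @ge0_integral_pushforward _ _ R R R sc msc P setT f measurableT mf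
  (fun y _ => f0 y).
rewrite preimage_setT => <-.
by apply: eq_measure_integral.
Qed.

Let g (x : R) : R := expR ((1 - a) * x ^+ 2 / 2).
Let mg : measurable_fun setT g.
Proof.
apply: measurableT_comp => //; apply: measurable_funM => //.
by apply: measurable_funM => //; exact: measurable_funX.
Qed.

Lemma mu_int (f : R -> \bar R) : (forall x, 0 <= f x) -> measurable_fun setT f ->
  \int[mu_meas P a]_x f x = \int[P]_x (f (x / sa)%R * (g (x / sa)%R)%:E).
Proof.
move=> f0 mf.
rewrite -(@density_integral _ _ _ (scaled P a) (mu_meas P a) g mg) //; last first.
  by move=> x; exact: expR_ge0.
rewrite scaled_int //.
- by move=> x; rewrite mule_ge0 // lee_fin expR_ge0.
- apply: emeasurable_funM => //; exact/measurable_EFinP.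
Qed.

Let asa : a = (sa ^+ 2)%R.
Proof. by rewrite sqr_sqrtr // ltW. Qed.

Lemma phig (c x : R) : (phi (sa * c - x / sa) * g (x / sa) =
  expR ((c ^+ 2 - a * c ^+ 2) / 2) * phi (c - x))%R.
Proof.
rewrite /g !phiE -(mulrA (normal_peak 1)) -expRD (mulrCA (expR _)) -expRD.
congr (_ * expR _)%R.
have sa0' := lt0r_neq0 sa0; have := asa; move: (sa) sa0' => s s0 ->; field; exact: s0.
Qed.

Lemma memGt (c x : R) : ((x / sa)%R \in `](sa * c)%R, +oo[) = (x \in `](a * c)%R, +oo[).
Proof.
by rewrite !in_itv /= !andbT ltr_pdivlMr // asa -mulrA (mulrC c) mulrA expr2.
Qed.

Lemma memLt (c x : R) : ((x / sa)%R \in `]-oo, (sa * c)%R[) = (x \in `]-oo, (a * c)%R[).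
Proof.
by rewrite !in_itv /= ltr_pdivrMr // asa -mulrA (mulrC c) mulrA expr2.
Qed.

Lemma memsGt (y x : R) : (x \in (`]y, +oo[%classic : set R)) = (y < x)%R.
Proof. by apply/idP/idP => [/set_mem|?]; [|apply/mem_set]; rewrite /= in_itv /= ?andbT. Qed.

Lemma memsLt (y x : R) : (x \in (`]-oo, y[%classic : set R)) = (x < y)%R.
Proof. by apply/idP/idP => [/set_mem|?]; [|apply/mem_set]; rewrite /= in_itv /= ?andbT. Qed.

Lemma Fpos (y : R) : (fun x => (Num.sg (x - y) * phi (y - x))%:E)^\+ =
  (fun x => (phi (y - x))%:E) \_ `]y, +oo[.
Proof.
apply/funext => x; rewrite funeposE patchE /= memsGt.
case: (ltgtP x y) => h.
- rewrite ltr0_sg ?subr_lt0 // mulN1r max_r //.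
  by rewrite lee_fin oppr_le0 phi_ge0.
- by rewrite gtr0_sg ?subr_gt0 // mul1r max_l // lee_fin phi_ge0.
- by rewrite h subrr sgr0 mul0r maxxx.
Qed.

Lemma Fneg (y : R) : (fun x => (Num.sg (x - y) * phi (y - x))%:E)^\- =
  (fun x => (phi (y - x))%:E) \_ `]-oo, y[.
Proof.
apply/funext => x; rewrite funenegE patchE /= memsLt.
case: (ltgtP x y) => h.
- by rewrite ltr0_sg ?subr_lt0 // mulN1r opprK max_l // lee_fin phi_ge0.
- rewrite gtr0_sg ?subr_gt0 // mul1r max_r //.
  by rewrite lee_fin oppr_le0 phi_ge0.
- by rewrite h subrr sgr0 mul0r oppr0 maxxx.
Qed.

Lemma mu_part (c : R) (D Dc : set R) : measurable D -> measurable Dc ->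
  (forall x, ((x / sa)%R \in D) = (x \in Dc)) ->
  \int[mu_meas P a]_x (((fun x => (phi (sa * c - x))%:E) \_ D) x) =
  (expR ((c ^+ 2 - a * c ^+ 2) / 2))%:E * J P c Dc.
Proof.
move=> mD mDc hD.
rewrite mu_int //; first last.
- by apply/(measurable_restrictT _ mD)/measurable_EFinP/measurable_funTS; exact: mphi.
- by move=> x; rewrite patchE; case: ifP => _ //; rewrite lee_fin phi_ge0.
rewrite /J -ge0_integralZl_EFin //; try exact: expR_ge0; try exact: mphiE; try (by move=> x _; rewrite lee_fin phi_ge0).
rewrite [RHS]integral_mkcond.
apply: eq_integral => x _; rewrite !patchE hD; case: ifP => _.
  by rewrite -EFinM phig.
by rewrite mul0e.
Qed.

Lemma mu_sg (c : R) :
  \int[mu_meas P a]_x ((Num.sg (x - sa * c) * phi (sa * c - x))%:E) =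
  ((expR ((c ^+ 2 - a * c ^+ 2) / 2)) * (j P c `](a * c)%R, +oo[ - j P c `]-oo, (a * c)%R[))%:E.
Proof.
rewrite integralE Fpos Fneg (@mu_part c _ `](a * c)%R, +oo[) //; last first.
  by move=> x; rewrite !memsGt ltr_pdivlMr // asa -mulrA (mulrC c) mulrA expr2.
rewrite (@mu_part c _ `]-oo, (a * c)%R[) //; last first.
  by move=> x; rewrite !memsLt ltr_pdivrMr // asa -mulrA (mulrC c) mulrA expr2.
by rewrite !Jj // -!EFinM -EFinB mulrBr.
Qed.
End transfer.

Local Close Scope classical_set_scope.
Theorem proposition5 (R : realType) (P : probability R R) (a : R) (ha : 0 < a) :
  (forall y : R, cond_median P y = a * y) <->
  (forall y : R,
     0%E = (\int[mu_meas P a]_x (Num.sg (x - y) * phi (y - x))%:E)%E /\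
     (\int[mu_meas P a]_x (Num.sg (x - y) * phi (y - x))%:E)%E
       = (\int[mu_meas P a]_x (gprime (x - y))%:E)%E).
Proof.
have sa0 : 0 < Num.sqrt a by rewrite sqrtr_gt0.
have yE : forall y : R, y = Num.sqrt a * (y / Num.sqrt a).
  by move=> y; rewrite mulrC divfK // gt_eqF.
have gp : forall y : R, (\int[mu_meas P a]_x (Num.sg (x - y) * phi (y - x))%:E)%E
       = (\int[mu_meas P a]_x (gprime (x - y))%:E)%E.
  move=> y; apply: eq_integral => x _; rewrite /gprime -phiN opprB //.
split => H y.
- split; last exact: gp.
  have bal := @bal_of_med R P a ha H (y / Num.sqrt a).
  by rewrite {1 2}(yE y) mu_sg // bal subrr mulr0.
- apply: (@med_of_bal R P a ha) => c.
  have [+ _] := H (Num.sqrt a * c).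
  rewrite mu_sg // => /esym /eqP; rewrite eqe mulf_eq0 gt_eqF ?expR_gt0 //= subr_eq0.
  by move/eqP.
Qed.
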